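(* Let $X_1,X_2,\dots,X_n$ be independent nonnegative random variables and set $S_n=X_1+\dots+X_n$. For $L\ge0$ such that $\mathbb{P}(S_n\le L)>0$ and any $\delta,\delta'$ with $0<\delta'\le\delta$, \[\mathbb{P}(X_1\ge\delta\mid S_n\le L)\le\frac{L}{\mathbb{P}(X_1\le\delta-\delta')\sum_{k=2}^n\mathbb{E}\big[X_k\mathbf{1}_{\{X_k\le\delta'\}}\big]}.\] *)

(* Defs.v *)
From HB Require Import structures.
From mathcomp Require Import all_boot all_order all_algebra.
From mathcomp Require Import all_classical all_reals all_analysis.
Set Implicit Arguments. Unset Strict Implicit. Unset Printing Implicit Defensive.
Import Order.TTheory GRing.Theory Num.Theory.
Local Open Scope classical_set_scope.
Local Open Scope ring_scope.

Definition mutually_independent d (T : measurableType d) (R : realType)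
  (P : probability T R) (I : set nat) (X : nat -> T -> R) : Prop :=
  forall (J : seq nat) (B : nat -> set R),
    uniq J -> (forall j, j \in J -> I j) ->
    (forall j, j \in J -> measurable (B j)) ->
    P (\bigcap_(j in [set j | j \in J]) (X j @^-1` B j)) =
    (\prod_(j <- J) P (X j @^-1` B j))%E.

(* Main.v *)
Require Import Defs.
From HB Require Import structures.
From mathcomp Require Import all_boot all_order all_algebra.
From mathcomp Require Import all_classical all_reals all_analysis.
From mathcomp Require Import ring lra.
Import Order.TTheory GRing.Theory Num.Theory.
Local Open Scope classical_set_scope.
Local Open Scope ring_scope.
From mathcomp Require Import measurable_realfun.
Section integ.
Local Open Scope ereal_scope.
Context d (T : measurableType d) (R : realType) (P : probability T R).

Lemma indep_integral (Yk : {RV P >-> R}) (E : set T) (mE : measurable E)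
  (g : R -> R) (mg : measurable_fun setT g) (g0 : forall y, (0 <= g y)%R) :
  (forall B, measurable B -> P (Yk @^-1` B `&` E) = P (Yk @^-1` B) * P E) ->
  \int[P]_x (g (Yk x) * \1_E x)%:E = P E * \int[P]_x (g (Yk x))%:E.
Proof.
move=> hind.
have mgY : measurable_fun setT (fun x => (g (Yk x))%:E).
  by apply: measurableT_comp => //; apply: measurableT_comp.
have -> : \int[P]_x (g (Yk x) * \1_E x)%:E = \int[P]_(x in E) (g (Yk x))%:E.
  rewrite [RHS]integral_mkcond; apply: eq_integral => x _.
  rewrite patchE indicE; case: (boolP (x \in E)) => _; by rewrite ?mulr1 ?mulr0.
rewrite (eq_measure_integral (mrestr P mE)); last first.
  by move=> A mA AE; rewrite -[RHS]/(P (A `&` E)) setIidl.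
rewrite -[E in \int[_]_(x in E) _]setCK -setTD -ge0_negligible_integral //; last 3 first.
  exact: measurableC.
  by move=> x _; rewrite lee_fin.
  by rewrite -[LHS]/(P (~` E `&` E)) setICl measure0.
have E1 : forall (m : {measure set T -> \bar R}), \int[m]_x (g (Yk x))%:E = \int[m]_(x in Yk @^-1` setT) ((EFin \o g) \o Yk) x.
  by move=> m; rewrite preimage_setT.
rewrite E1 -ge0_integral_pushforward //; last first;
  [by move=> y _; rewrite lee_fin|by apply: measurableT_comp => //|].
rewrite E1 -ge0_integral_pushforward //; last first;
  [by move=> y _; rewrite lee_fin|by apply: measurableT_comp => //|].
have PE0 : (0 <= fine (P E))%R by apply: fine_ge0.
have PEE : P E = (fine (P E))%:E by rewrite fineK// fin_num_measure.
rewrite PEE.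
rewrite -[X in X%:E]/((NngNum PE0)%:num) -ge0_integral_mscale //; last 2 first.
  by apply: measurableT_comp => //.
  by move=> y _; rewrite lee_fin.
apply: eq_measure_integral => A mA _.
rewrite -[LHS]/(P (Yk @^-1` A `&` E)) hind // muleC.
by rewrite -[RHS]/((fine (P E))%:E * P (Yk @^-1` A)) -PEE.
Qed.
End integ.
Arguments indep_integral {d T R P Yk E} mE {g} mg g0.
Section indep.
Local Open Scope ereal_scope.
Context d (T : measurableType d) (R : realType) (P : probability T R).
Variables (X : nat -> {RV P >-> R}) (I : set nat).
Hypothesis hind : mutually_independent P I (fun i => X i : T -> R).

Definition bigI (J : seq nat) (B : nat -> set R) : set T :=
  \bigcap_(j in [set j | j \in J]) (X j @^-1` B j).

Lemma preimX_meas j B : measurable B -> measurable (X j @^-1` B).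
Proof. by move=> mB; rewrite -[X in measurable X]setTI; exact: (measurable_funP (X j)). Qed.

Lemma bigI_meas J B : (forall j, measurable (B j)) -> measurable (bigI J B).
Proof. by move=> mB; apply: bigcap_measurableType => k _; exact: preimX_meas. Qed.

Lemma bigI_cat K J Bk B : uniq (K ++ J) -> (forall j, j \in K ++ J -> I j) ->
  (forall j, measurable (Bk j)) -> (forall j, measurable (B j)) ->
  P (bigI K Bk `&` bigI J B) = P (bigI K Bk) * P (bigI J B).
Proof.
move=> u KJI mBk mB.
have := u; rewrite cat_uniq => /and3P[uK hKJ uJ].
pose C j := if j \in K then Bk j else B j.
have mC j : measurable (C j) by rewrite /C; case: ifP.
have -> : bigI K Bk `&` bigI J B = bigI (K ++ J) C.
  apply/seteqP; split=> x.
    move=> [hK hJ] j /=; rewrite mem_cat /C => /orP[jK|jJ].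
      by rewrite jK; exact: hK.
    have -> : (j \in K) = false.
      by apply/negP => jK; move/hasP: hKJ; apply; exists j.
    exact: hJ.
  move=> h; split=> j /= jj.
    by have := h j; rewrite /= mem_cat jj /C jj /=; apply.
  have jK : (j \in K) = false.
    by apply/negP => jK; move/hasP: hKJ; apply; exists j.
  by have := h j; rewrite /= mem_cat jj orbT /C jK; apply.
rewrite /bigI (hind (K ++ J) C u KJI); last by move=> j _; exact: mC.
rewrite (hind K Bk uK); [|by move=> j jK; apply: KJI; rewrite mem_cat jK|by move=> j _].
rewrite (hind J B uJ); [|by move=> j jJ; apply: KJI; rewrite mem_cat jJ orbT|by move=> j _].
rewrite big_cat /=; congr (_ * _); apply: eq_big_seq => j jj; rewrite /C.
  by rewrite jj.
have jK : (j \in K) = false.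
  by apply/negP => jK; move/hasP: hKJ; apply; exists j.
by rewrite jK.
Qed.

Definition GJ (J : seq nat) : set (set T) :=
  [set A | exists2 B : nat -> set R, (forall j, measurable (B j)) & A = bigI J B].

Lemma GJ_setI J : setI_closed (GJ J).
Proof.
move=> A1 A2 [B1 mB1 ->] [B2 mB2 ->]; exists (fun j => B1 j `&` B2 j).
  by move=> j; exact: measurableI.
apply/seteqP; split=> x.
  by move=> [h1 h2] j jj; split; [exact: h1|exact: h2].
by move=> h; split=> j jj; have [] := h j jj.
Qed.

Lemma fin_mulBr (a b c : \bar R) : a \is a fin_num -> b \is a fin_num ->
  c \is a fin_num -> a * (b - c) = a * b - a * c.
Proof. by move=> fa fb fc; rewrite muleBr // fin_num_adde_defl // fin_numN. Qed.

Lemma indep_sigma K Bk J (A : set T) : uniq (K ++ J) ->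
  (forall j, j \in K ++ J -> I j) -> (forall j, measurable (Bk j)) ->
  <<s GJ J >> A -> measurable A /\ P (bigI K Bk `&` A) = P (bigI K Bk) * P A.
Proof.
move=> u KJI mBk.
set F0 := bigI K Bk.
have mF0 : measurable F0 by exact: bigI_meas.
pose H := [set A1 : set T | measurable A1 /\ P (F0 `&` A1) = P F0 * P A1].
suff : <<s GJ J >> `<=` H by move=> sub /sub.
apply: lambda_system_subset.
- exact: GJ_setI.
- split.
  + by [].
  + by split => //; rewrite setIT probability_setT mule1.
  + move=> A1 B1 BA [mA hA] [mB hB]; split; first exact: measurableD.
    have -> : F0 `&` (A1 `\` B1) = (F0 `&` A1) `\` (F0 `&` B1).
      by apply/seteqP; split=> x /=; [move=> [? [? ?]]; split=> // -[]|move=> [[? ?] h]; split=> //; split=> // ?; apply: h].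
    rewrite measureD //; [|exact: measurableI|exact: measurableI|]; last first.
      by apply: (le_lt_trans (probability_le1 _ _)); [exact: measurableI|exact: ltey].
    rewrite measureD //; last first.
      by apply: (le_lt_trans (probability_le1 _ _)); [|exact: ltey].
    have -> : F0 `&` A1 `&` (F0 `&` B1) = F0 `&` B1.
      by apply/seteqP; split=> x /=; [move=> [[? ?] [? ?]]|move=> [? ?]; split; split=> //; exact: BA].
    rewrite (setIidr BA) fin_mulBr ?fin_num_measure //.
    by congr (_ - _); [exact: hA|exact: hB].
  + move=> F ndF hF; split.
      by apply: bigcupT_measurable => i; have [] := hF i.
    have h1 : (fun n => P (F0 `&` F n)) @ \oo --> P (F0 `&` \bigcup_n F n).
      rewrite setI_bigcupr; apply: (nondecreasing_cvg_mu (mu := P) (F := fun n => F0 `&` F n)).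
      * by move=> i; apply: measurableI => //; have [] := hF i.
      * by apply: bigcupT_measurable => i; apply: measurableI => //; have [] := hF i.
      * by move=> m k mk; apply/subsetPset; apply: setIS; apply/subsetPset; exact: ndF.
    have h2 : (fun n => P (F0 `&` F n)) @ \oo --> P F0 * P (\bigcup_n F n).
      have -> : (fun n => P (F0 `&` F n)) = (fun n => P F0 * P (F n)).
        by apply/funext => n; have [] := hF n.
      apply: cvgeZl; first exact: fin_num_measure.
      apply: nondecreasing_cvg_mu => //.
      * by move=> i; have [] := hF i.
      * by apply: bigcupT_measurable => i; have [] := hF i.
    by rewrite -(cvg_lim _ h1) // -(cvg_lim _ h2).
- by move=> A1 [B1 mB1 ->]; split; [exact: bigI_meas|exact: bigI_cat].
- by [].
Qed.

End indep.
Arguments bigI {d T R P} X J B.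
Arguments GJ {d T R P} X J.
Arguments preimX_meas {d T R P} X j {B}.
Arguments bigI_meas {d T R P} X {J B}.
Arguments bigI_cat {d T R P X I} hind {K J Bk B}.
Arguments indep_sigma {d T R P X I} hind {K Bk J A}.
Section sumsig.
Context d (T : measurableType d) (R : realType) (P : probability T R).
Variables (X : nat -> {RV P >-> R}).

Lemma sum_le_sigma J c : <<s GJ X J >> [set x | \sum_(j <- J) X j x <= c].
Proof.
pose T' := g_sigma_algebraType (GJ X J).
have mXj : forall j, j \in J -> measurable_fun (setT : set T') (X j : T' -> R).
  move=> j jJ _ B mB; rewrite setTI; apply: sub_sigma_algebra.
  exists (fun i => if i == j then B else setT).
    by move=> i; case: eqP.
  apply/seteqP; split=> x /=.
    by move=> Bx i _; case: eqP => [->//|].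
  by move=> h; have := h j jJ; rewrite /= eqxx.
have ms : forall s, {subset s <= J} ->
    measurable_fun (setT : set T') (fun x : T' => \sum_(j <- s) X j x).
  elim=> [|a s IH] sJ.
    by under eq_fun do rewrite big_nil; exact: measurable_cst.
  under eq_fun do rewrite big_cons.
  apply: measurable_funD.
    by apply: mXj; apply: sJ; exact: mem_head.
  by apply: IH => i hi; apply: sJ; rewrite inE hi orbT.
have := ms J (fun i h => h) measurableT (`]-oo, c]%classic) (measurable_itv _).
rewrite setTI; congr (<<s _ >> _).
Qed.
End sumsig.
Arguments sum_le_sigma {d T R P} X J c.
Section main.
Local Open Scope ereal_scope.
Context d (T : measurableType d) (R : realType) (P : probability T R)
  (n : nat) (X : nat -> {RV P >-> R}) (L delta delta' : R).
Hypothesis n0 : (0 < n)%N.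
Hypothesis hind : mutually_independent P [set i | (1 <= i <= n)%N] (fun i => X i : T -> R).
Hypothesis Xge0 : forall i x, (1 <= i <= n)%N -> (0 <= X i x)%R.
Hypothesis d'0 : (0 < delta')%R.
Hypothesis dd' : (delta' <= delta)%R.

Let I := [set i | (1 <= i <= n)%N].

Lemma mEM (f g : T -> R) : measurable_fun setT f -> measurable_fun setT g ->
  measurable_fun setT (fun x => (f x * g x)%:E).
Proof. by move=> mf mg; apply: measurableT_comp => //; exact: measurable_funM. Qed.

Lemma bigI1 j B : bigI X [:: j] B = X j @^-1` B j.
Proof.
apply/seteqP; split=> x /=.
  by move=> h; apply: h; rewrite /= inE.
by move=> h i; rewrite /= inE => /eqP ->.
Qed.

Lemma bigI2 j1 j2 B : bigI X [:: j1; j2] B = X j1 @^-1` B j1 `&` X j2 @^-1` B j2.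
Proof.
apply/seteqP; split=> x /=.
  by move=> h; split; apply: h; rewrite /= !inE eqxx ?orbT.
by move=> [h1 h2] i; rewrite /= !inE => /orP[/eqP ->|/eqP ->].
Qed.

Lemma meas_sumle (s : seq nat) (c : R) :
  measurable [set x | (\sum_(i <- s) X i x <= c)%R].
Proof.
have := @measurable_sum _ _ _ setT _ s (fun i => X i : T -> R) (fun i => measurable_funPT (X i)) measurableT _
  (measurable_itv `]-oo, c]).
by rewrite setTI.
Qed.

Lemma meas_ge1 (c : R) : measurable [set x | (c <= X 1%N x)%R].
Proof.
have := (measurable_funPT (X 1%N) : measurable_fun setT (X 1%N : T -> R)) measurableT _ (measurable_itv `[c, +oo[).
rewrite setTI; congr measurable; apply/seteqP; split=> x /=; rewrite in_itv /= andbT //.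
Qed.

Lemma meas_le (j : nat) (c : R) : measurable [set x | (X j x <= c)%R].
Proof.
have := (measurable_funPT (X j) : measurable_fun setT (X j : T -> R)) measurableT _ (measurable_itv `]-oo, c]).
by rewrite setTI.
Qed.

Section perk.
Variable k : nat.
Hypothesis k2 : (2 <= k)%N.
Hypothesis kn : (k <= n)%N.

Let J' := [seq j <- index_iota 2 n.+1 | j != k].

Lemma decomp x : (\sum_(1 <= i < n.+1) X i x = X 1%N x + (X k x + \sum_(j <- J') X j x))%R.
Proof.
rewrite big_ltn ?ltnS //; congr (_ + _)%R.
rewrite (bigD1_seq k) /= ?iota_uniq //; last by rewrite mem_index_iota k2 ltnS.
by rewrite big_filter.
Qed.

Lemma J'sub j : j \in J' -> (2 <= j <= n)%N.
Proof. by rewrite mem_filter mem_index_iota ltnS => /andP[_]. Qed.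

Lemma J'uniq : uniq J'.
Proof. by rewrite filter_uniq // iota_uniq. Qed.

Lemma k_notin : k \notin J'.
Proof. by rewrite mem_filter eqxx. Qed.

Lemma one_notin : 1%N \notin J'.
Proof. by apply/negP => /J'sub. Qed.

Lemma perk :
  P ([set x | (delta <= X 1%N x)%R] `&` [set x | (\sum_(1 <= i < n.+1) X i x <= L)%R]) *
  (P [set x | (X 1%N x <= delta - delta')%R] *
   \int[P]_x (X k x * \1_[set y | (X k y <= delta')%R] x)%:E)
  <= \int[P]_x (`|X k x| * \1_[set x | (\sum_(1 <= i < n.+1) X i x <= L)%R] x)%:E.
Proof.
set F := _ `&` _.
set A := [set x | (\sum_(1 <= i < n.+1) X i x <= L)%R].
set Q := P [set x | (X 1%N x <= delta - delta')%R].
set A' := [set x | (\sum_(j <- J') X j x <= L - delta)%R].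
set E := [set x | (X 1%N x <= delta - delta')%R] `&` A'.
have Xk0 x : (0 <= X k x)%R by apply: Xge0; rewrite kn andbT (leq_trans _ k2).
have sA' : <<s GJ X J' >> A' by exact: sum_le_sigma.
pose B1 := fun _ : nat => [set y : R | (y <= delta - delta')%R].
have mB1 : forall j, measurable (B1 j).
  by move=> j; rewrite /B1 -set_itv_infty_c; exact: measurable_itv.
have u1 : uniq ([:: 1%N] ++ J') by rewrite /= one_notin J'uniq.
have I1 : forall j, j \in [:: 1%N] ++ J' -> I j.
  move=> j; rewrite /= inE => /orP[/eqP ->|/J'sub]; first by rewrite /I /= n0.
  by move=> /andP[h1 h2]; rewrite /I /= h2 (leq_trans _ h1).
have [mA' PE] := @indep_sigma d T R P X I hind [:: 1%N] B1 J' A' u1 I1 mB1 sA'.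
rewrite bigI1 -/E in PE.
have mE : measurable E by apply: measurableI => //; exact: (preimX_meas X 1%N (mB1 1%N)).
have mF : measurable F by apply: measurableI; [exact: meas_ge1|exact: meas_sumle].
have PF : P F <= P A'.
  apply: (le_measure P); rewrite ?inE //.
  move=> x [/= h1 h2]; move: h2; rewrite decomp /A' /= => h2.
  have := Xk0 x; lra.
have k1 : (k == 1%N) = false by apply/eqP => k1e; move: k2; rewrite k1e.
have k1' : (1%N == k) = false by rewrite eq_sym.
have hB : forall B, measurable B -> P (X k @^-1` B `&` E) = P (X k @^-1` B) * P E.
  move=> B mB.
  pose Bk' := fun j : nat => if j == k then B else B1 j.
  have mBk' : forall j, measurable (Bk' j) by move=> j; rewrite /Bk'; case: ifP.
  have u2 : uniq ([:: k; 1%N] ++ J').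
    by rewrite /= inE k1 /= k_notin one_notin J'uniq.
  have I2 : forall j, j \in [:: k; 1%N] ++ J' -> I j.
    move=> j; rewrite /= !inE => /orP[/eqP ->|/orP[/eqP ->|/J'sub]].
    - by rewrite /I /= kn (leq_trans _ k2).
    - by rewrite /I /= n0.
    - by move=> /andP[h1 h2]; rewrite /I /= h2 (leq_trans _ h1).
  have [_ h] := @indep_sigma d T R P X I hind [:: k; 1%N] Bk' J' A' u2 I2 mBk' sA'.
  rewrite bigI2 /Bk' eqxx k1' in h.
  have u3 : uniq ([:: k] ++ [:: 1%N]) by rewrite /= inE k1.
  have I3 : forall j, j \in [:: k] ++ [:: 1%N] -> I j.
    move=> j; rewrite /= !inE => /orP[/eqP ->|/eqP ->].
    - by rewrite /I /= kn (leq_trans _ k2).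
    - by rewrite /I /= n0.
  have h' := @bigI_cat d T R P X I hind [:: k] [:: 1%N] Bk' Bk' u3 I3 mBk' mBk'.
  rewrite !bigI1 /Bk' eqxx k1' in h'.
  rewrite /E setIA h h' PE -muleA //.
pose g := fun y : R => (`|y| * \1_[set z : R | (z <= delta')%R] y)%R.
have mg : measurable_fun setT g.
  apply: measurable_funM; first exact: normr_measurable.
  by apply: measurable_indic; rewrite -set_itvNyc; exact: measurable_itv.
have g0 : forall y, (0 <= g y)%R by move=> y; rewrite /g mulr_ge0.
have hint := @indep_integral d T R P (X k) E mE g mg g0 hB.
have ek : \int[P]_x (g (X k x))%:E =
    \int[P]_x (X k x * \1_[set y | (X k y <= delta')%R] x)%:E.
  apply: eq_integral => x _; congr EFin; rewrite /g ger0_norm //; congr (_ * _)%R.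
have e0 : 0 <= \int[P]_x (X k x * \1_[set y | (X k y <= delta')%R] x)%:E.
  by apply: integral_ge0 => x _; rewrite lee_fin mulr_ge0.
apply: (le_trans (lee_wpmul2r _ PF)).
  by apply: mule_ge0 => //; exact: measure_ge0.
have PE' : P E = Q * P A' by exact: PE.
rewrite muleA (muleC (P A')) -PE' -ek -hint.
apply: ge0_le_integral => //.
- by move=> x _; rewrite lee_fin mulr_ge0.
- apply: mEM; last exact: measurable_indic.
  exact: measurableT_comp.
- apply: mEM; last by apply: measurable_indic; exact: meas_sumle.
  exact: measurableT_comp.
- move=> x _; rewrite lee_fin /g !indicE.
  have [xE|xE] := boolP (x \in E); last by rewrite mulr0 mulr_ge0.
  have [xd|xd] := boolP (X k x \in [set z : R | (z <= delta')%R]); last by rewrite mulr0 mul0r mulr_ge0.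
  have xA : x \in A.
    move: xE xd; rewrite !in_setE /E /A /A' /= decomp => -[h1 h2] h3.
    lra.
  by rewrite xA mulr1.
Qed.
End perk.

Hypothesis L0 : (0 <= L)%R.

Lemma sumbound :
  \sum_(2 <= k < n.+1) \int[P]_x (`|X k x| * \1_[set x | (\sum_(1 <= i < n.+1) X i x <= L)%R] x)%:E
  <= L%:E * P [set x | (\sum_(1 <= i < n.+1) X i x <= L)%R].
Proof.
set A := [set x | (\sum_(1 <= i < n.+1) X i x <= L)%R].
have mA : measurable A by exact: meas_sumle.
have mf : forall k, measurable_fun setT (fun x => (`|X k x| * \1_A x)%:E).
  move=> k; apply: mEM; last exact: measurable_indic.
  exact: measurableT_comp.
have f0 : forall k x, setT x -> 0 <= (`|X k x| * \1_A x)%:E.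
  by move=> k x _; rewrite lee_fin mulr_ge0.
rewrite -(@ge0_integral_sum _ _ _ P setT measurableT nat (fun k x => (`|X k x| * \1_A x)%:E) mf f0).
have -> : L%:E * P A = \int[P]_x (L * \1_((fun _ : R => A) L) x)%:E.
  rewrite (@integralZl_indic _ _ _ P setT measurableT (fun _ => A) L) //.
    by rewrite integral_indic // setIT.
  by move=> hL; move: (lt_le_trans hL L0); rewrite ltxx.
apply: ge0_le_integral => //.
- by move=> x _; apply: sume_ge0 => k _; exact: f0.
- exact: emeasurable_sum.
- apply: mEM; last exact: measurable_indic.
  exact: measurable_cst.
- move=> x _; rewrite sumEFin lee_fin -big_distrl /= indicE.
  have [xA|xA] := boolP (x \in A); last by rewrite !mulr0.
  rewrite !mulr1; move: xA; rewrite in_setE /A /= big_ltn ?ltnS // => h.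
  have h1 := Xge0 1%N x n0.
  have -> : (\sum_(2 <= k < n.+1) `|X k x| = \sum_(2 <= k < n.+1) X k x)%R.
    rewrite big_nat_cond [RHS]big_nat_cond; apply: eq_bigr => k /andP[/andP[k2 kn] _].
    by rewrite ger0_norm // Xge0 //; apply/andP; split; [exact: leq_trans _ k2|by rewrite -ltnS].
  lra.
Qed.

Hypothesis PA0 : (0 < P [set x | (\sum_(1 <= i < n.+1) X i x <= L)%R])%E.

Lemma final :
  (P ([set x | (delta <= X 1%N x)%R] `&` [set x | (\sum_(1 <= i < n.+1) X i x <= L)%R])
     / P [set x | (\sum_(1 <= i < n.+1) X i x <= L)%R]
   <= L%:E / (P [set x | (X 1%N x <= delta - delta')%R]
              * \sum_(2 <= k < n.+1)
                  \int[P]_x (X k x * \1_[set y | (X k y <= delta')%R] x)%R%:E))%E.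
Proof.
have M : P ([set x | (delta <= X 1%N x)%R] `&` [set x | (\sum_(1 <= i < n.+1) X i x <= L)%R]) *
   (P [set x | (X 1%N x <= delta - delta')%R]
              * \sum_(2 <= k < n.+1)
                  \int[P]_x (X k x * \1_[set y | (X k y <= delta')%R] x)%R%:E)
   <= L%:E * P [set x | (\sum_(1 <= i < n.+1) X i x <= L)%R].
  have e0 : forall k, (2 <= k < n.+1)%N ->
      0 <= \int[P]_x (X k x * \1_[set y | (X k y <= delta')%R] x)%R%:E.
    move=> k /andP[k2 kn]; apply: integral_ge0 => x _; rewrite lee_fin mulr_ge0 //.
    by apply: Xge0; apply/andP; split; [exact: leq_trans _ k2|by rewrite -ltnS].
  rewrite big_nat_cond ge0_sume_distrr; last by move=> k /andP[hk _]; exact: e0.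
  rewrite ge0_sume_distrr; last first.
    by move=> k /andP[hk _]; apply: mule_ge0; [exact: measure_ge0|exact: e0].
  apply: le_trans sumbound; rewrite [X in _ <= X]big_nat_cond.
  apply: lee_sum => k /andP[/andP[k2 kn] _]; apply: perk => //.
set A := [set x | (\sum_(1 <= i < n.+1) X i x <= L)%R] in M *.
set F := _ `&` A in M *.
set D := (P [set x | (X 1%N x <= delta - delta')%R] * _) in M *.
have mA : measurable A by exact: meas_sumle.
have mF : measurable F by apply: measurableI; [exact: meas_ge1|exact: mA].
have D0 : 0 <= D.
  apply: mule_ge0; first exact: measure_ge0.
  rewrite big_nat_cond; apply: sume_ge0 => k /andP[/andP[k2 kn] _].
  apply: integral_ge0 => x _; rewrite lee_fin mulr_ge0 //.
  by apply: Xge0; apply/andP; split; [exact: leq_trans _ k2|by rewrite -ltnS].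
have X1S x : (X 1%N x <= \sum_(1 <= i < n.+1) X i x)%R.
  rewrite big_ltn ?ltnS // lerDl big_nat_cond; apply: sumr_ge0 => k /andP[/andP[k2 kn] _].
  by apply: Xge0; apply/andP; split; [exact: leq_trans _ k2|by rewrite -ltnS].
have PF0 : 0 <= P F by exact: measure_ge0.
have fF : P F \is a fin_num by exact: fin_num_measure.
have fA : P A \is a fin_num by exact: fin_num_measure.
have [L0'|Lpos] : L = 0%R \/ (0 < L)%R.
  by move: L0; rewrite le_eqVlt => /orP[/eqP <-|]; [left|right].
  have -> : P F = 0.
    rewrite (_ : F = set0) ?measure0 //; apply/seteqP; split=> x //= [h1 h2].
    move: h1 h2; rewrite /A /= L0' => h1 h2; have h := le_trans h1 (le_trans (X1S x) h2); move: (lt_le_trans (lt_le_trans d'0 dd') h); by rewrite ltxx.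
  by rewrite mul0e L0' mule_ge0 // inve_ge0.
case Dd : D D0 M => [r| |] // D0 M.
- rewrite lee_fin in D0.
  have [r0|rpos] : r = 0%R \/ (0 < r)%R.
    by move: D0; rewrite le_eqVlt => /orP[/eqP <-|]; [left|right].
    by rewrite r0 inver eqxx gt0_muley ?lte_fin // leey.
  rewrite -(fineK fF) -(fineK fA) in M *.
  have a0 : (0 < fine (P A))%R by rewrite -lte_fin fineK.
  rewrite !inver gt_eqF // gt_eqF // -!EFinM lee_fin.
  rewrite -!EFinM lee_fin in M.
  rewrite ler_pdivrMr // mulrAC ler_pdivlMr //.
- rewrite invey mule0.
  have : ~ (0 < P F).
    move=> hp; move: M; rewrite gt0_muley // leye_eq => /eqP h.
    have : L%:E * P A \is a fin_num by rewrite fin_numM.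
    by rewrite h.
  move=> hn; have -> : P F = 0.
    by apply/eqP; rewrite eq_le PF0 andbT leNgt; apply/negP.
  by rewrite mul0e.
Qed.
End main.

Theorem lemma3p2 (d : measure_display) (T : measurableType d) (R : realType)
  (P : probability T R) (n : nat) (X : nat -> {RV P >-> R})
  (L delta delta' : R) :
  (0 < n)%N ->
  mutually_independent P [set i | (1 <= i <= n)%N] (fun i => X i : T -> R) ->
  (forall i x, (1 <= i <= n)%N -> 0 <= X i x) ->
  0 <= L ->
  (0 < P [set x | (\sum_(1 <= i < n.+1) X i x <= L)%R])%E ->
  0 < delta' -> delta' <= delta ->
  (P ([set x | (delta <= X 1%N x)%R] `&` [set x | (\sum_(1 <= i < n.+1) X i x <= L)%R])
     / P [set x | (\sum_(1 <= i < n.+1) X i x <= L)%R]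
   <= L%:E / (P [set x | (X 1%N x <= delta - delta')%R]
              * \sum_(2 <= k < n.+1)
                  \int[P]_x (X k x * \1_[set y | (X k y <= delta')%R] x)%R%:E))%E.
Proof.
move=> n0 hind Xge0 L0 PA0 d0 dd.
by apply: final.
Qed.
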